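(* Fix $m\ge 2$, a nonempty proper subset $\mathcal{S}\subsetneq[m]=\{1,\dots,m\}$ with complement $\mathcal{S}^c$, and $\sigma_e^2>0$. Consider the linear model $y=\mathbf{z}^\top\mathbf{u}+e$ with fixed (non-random) $\mathbf{u}\in\mathbb{R}^m$, where $\mathbb{E}(\mathbf{z})=0$, $\mathrm{Var}(\mathbf{z})=\Sigma$ is positive definite, and $e$ is independent of $\mathbf{z}$ with mean $0$ and variance $\sigma_e^2$. Define the fixed-effects heritability $$h^2(\mathbf{u};\Sigma)=\frac{\mathbf{u}^\top\Sigma\mathbf{u}}{\mathbf{u}^\top\Sigma\mathbf{u}+\sigma_e^2}.$$ Suppose that the heritability attributable to $\mathcal{S}$ is a quadratic form in $\mathbf{u}$, namely for every positive definite $\Sigma$ there is a symmetric $m\times m$ matrix $\Gamma(\Sigma)$ with $$h^2_{\mathcal{S}}(\mathbf{u};\Sigma)=\frac{\mathbf{u}^\top\Gamma(\Sigma)\mathbf{u}}{\mathbf{u}^\top\Sigma\mathbf{u}+\sigma_e^2}\quad\text{for all }\mathbf{u}\in\mathbb{R}^m$$ (equivalently, after normalizing $\mathrm{Var}(y)=1$, $h^2_{\mathcal S}=\mathbf{u}^\top\Gamma(\Sigma)\mathbf{u}$), and that for every positive definite $\Sigma$: (i) $0\le h^2_{\mathcal{S}}(\mathbf{u};\Sigma)\le h^2(\mathbf{u};\Sigma)$ for all $\mathbf{u}\in\mathbb{R}^m$; (ii) $h^2_{\mathcal{S}}(\mathbf{u};\Sigma)=h^2(\mathbf{u};\Sigma)$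 if and only if $\mathbf{u}_{\mathcal{S}^c}=0$; (iii) $\Gamma(\Sigma)$ does not depend on the block $\Sigma_{\mathcal{S}^c,\mathcal{S}^c}$, i.e. $\Gamma(\Sigma)=\Gamma(\Sigma')$ whenever $\Sigma,\Sigma'$ are positive definite and agree in all entries outside the $\mathcal{S}^c\times\mathcal{S}^c$ block. Then for every positive definite $\Sigma$ and every $\mathbf{u}\in\mathbb{R}^m$, $$h^2_{\mathcal{S}}(\mathbf{u};\Sigma)=\frac{\mathbf{u}^\top\Sigma\mathbf{u}-\mathbf{u}_{\mathcal{S}^c}^\top\Sigma_{\mathcal{S}^c\mid\mathcal{S}}\mathbf{u}_{\mathcal{S}^c}}{\mathbf{u}^\top\Sigma\mathbf{u}+\sigma_e^2},$$ where $\Sigma_{\mathcal{S}^c\mid\mathcal{S}}=\Sigma_{\mathcal{S}^c,\mathcal{S}^c}-\Sigma_{\mathcal{S}^c,\mathcal{S}}\Sigma_{\mathcal{S},\mathcal{S}}^{-1}\Sigma_{\mathcal{S},\mathcal{S}^c}$.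
   Context: For $\mathcal{S}_1,\mathcal{S}_2\subseteq[m]$, $\Sigma_{\mathcal{S}_1,\mathcal{S}_2}$ denotes the submatrix of $\Sigma$ with rows indexed by $\mathcal{S}_1$ and columns indexed by $\mathcal{S}_2$; $\mathbf{u}_{\mathcal{S}}$ denotes the subvector of $\mathbf{u}$ with coordinates in $\mathcal{S}$. *)

(* Defs.v *)
From HB Require Import structures.
From mathcomp Require Import all_boot all_order all_algebra.
Set Implicit Arguments. Unset Strict Implicit. Unset Printing Implicit Defensive.
Import Order.TTheory GRing.Theory Num.Theory.
Local Open Scope ring_scope.

Section Defs.
Variables (R : rcfType) (m : nat).

Definition qf (u : 'cV[R]_m) (A : 'M[R]_m) : R := (u^T *m A *m u) 0 0.

Definition posdef (A : 'M[R]_m) : Prop :=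
  A^T = A /\ forall u : 'cV[R]_m, u != 0 -> 0 < qf u A.

Definition h2 (se2 : R) (Sigma : 'M[R]_m) (u : 'cV[R]_m) : R :=
  qf u Sigma / (qf u Sigma + se2).

Definition h2S (se2 : R) (Gamma : 'M[R]_m -> 'M[R]_m) (Sigma : 'M[R]_m)
  (u : 'cV[R]_m) : R :=
  qf u (Gamma Sigma) / (qf u Sigma + se2).

(* submatrix Sigma_{A,B}, indices enumerated increasingly *)
Definition subm (A B : {set 'I_m}) (M : 'M[R]_m) : 'M[R]_(#|A|, #|B|) :=
  \matrix_(i < #|A|, j < #|B|) M (enum_val i) (enum_val j).

Definition subv (A : {set 'I_m}) (u : 'cV[R]_m) : 'cV[R]_#|A| :=
  \col_(i < #|A|) u (enum_val i) 0.

Definition schur (S : {set 'I_m}) (Sigma : 'M[R]_m) : 'M[R]_#|~: S| :=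
  subm (~: S) (~: S) Sigma
  - subm (~: S) S Sigma *m invmx (subm S S Sigma) *m subm S (~: S) Sigma.

End Defs.

(* Main.v *)
Require Import Defs.
From HB Require Import structures.
From mathcomp Require Import all_boot all_order all_algebra.
From mathcomp Require Import ring lra.
Import Order.TTheory GRing.Theory Num.Theory.
Local Open Scope ring_scope.
Set Implicit Arguments. Unset Strict Implicit.

Definition Pm (R : rcfType) (m : nat) (A : {set 'I_m}) : 'M[R]_(m, #|A|) :=
  \matrix_(i < m, k < #|A|) (i == enum_val k)%:R.

Lemma subvE (R : rcfType) m (A : {set 'I_m}) (u : 'cV[R]_m) :
  subv A u = (Pm R A)^T *m u.
Proof.
apply/matrixP => k z; rewrite !mxE (bigD1 (enum_val k)) //= big1 ?addr0.
  by rewrite ord1 !mxE eqxx mul1r.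
by move=> i /negPf ni; rewrite !mxE ?ni ?(eq_sym i) ?ni ?mul0r ?mulr0.
Qed.

Lemma submE (R : rcfType) m (A B : {set 'I_m}) (M : 'M[R]_m) :
  subm A B M = (Pm R A)^T *m M *m Pm R B.
Proof.
apply/matrixP => k l; rewrite !mxE (bigD1 (enum_val l)) //= big1 ?addr0.
  rewrite !mxE eqxx mulr1 (bigD1 (enum_val k)) //= big1 ?addr0.
    by rewrite !mxE eqxx mul1r.
  by move=> i /negPf ni; rewrite !mxE ?ni ?(eq_sym i) ?ni ?mul0r ?mulr0.
by move=> i /negPf ni; rewrite !mxE ni mulr0.
Qed.

Lemma PtP (R : rcfType) m (A B : {set 'I_m}) k l :
  ((Pm R A)^T *m Pm R B) k l = (enum_val k == enum_val l)%:R.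
Proof.
rewrite !mxE (bigD1 (enum_val k)) //= big1 ?addr0.
  by rewrite !mxE eqxx mul1r.
by move=> i /negPf ni; rewrite !mxE ?ni ?(eq_sym i) ?ni ?mul0r ?mulr0.
Qed.

Lemma PtP1 (R : rcfType) m (A : {set 'I_m}) : (Pm R A)^T *m Pm R A = 1%:M.
Proof.
apply/matrixP => k l; rewrite PtP !mxE.
by case: (eqVneq k l) => [->|kl]; rewrite ?eqxx // (inj_eq enum_val_inj) (negPf kl).
Qed.

Lemma PtP0 (R : rcfType) m (S : {set 'I_m}) : (Pm R (~: S))^T *m Pm R S = 0.
Proof.
apply/matrixP => k l; rewrite PtP !mxE.
have := enum_valP k; have := enum_valP l; rewrite !inE => hl hk.
by case: eqP => // e; rewrite e hl in hk.
Qed.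

Lemma PPt (R : rcfType) m (A : {set 'I_m}) i j :
  (Pm R A *m (Pm R A)^T) i j = ((i == j) && (i \in A))%:R.
Proof.
rewrite !mxE.
case: (boolP (i \in A)) => iA.
  rewrite (bigD1 (enum_rank_in iA i)) //= big1 ?addr0.
    by rewrite !mxE enum_rankK_in // eqxx mul1r andbT eq_sym.
  move=> k nk; rewrite !mxE.
  case: eqP => [e|]; last by rewrite mul0r.
  by move: nk; rewrite -(inj_eq enum_val_inj) enum_rankK_in // e eqxx.
rewrite andbF big1 // => k _; rewrite !mxE.
case: eqP => [e|]; last by rewrite mul0r.
by move: iA; rewrite e enum_valP.
Qed.

Lemma PPt1 (R : rcfType) m (S : {set 'I_m}) :
  Pm R S *m (Pm R S)^T + Pm R (~: S) *m (Pm R (~: S))^T = 1%:M.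
Proof.
apply/matrixP => i j; rewrite mxE !PPt !mxE inE.
by case: (i \in S); case: (i == j); rewrite ?addr0 ?add0r.
Qed.

Lemma PXPt0 (R : rcfType) m (S : {set 'I_m}) (X : 'M[R]_#|~: S|) i j :
  (i \in S) || (j \in S) -> (Pm R (~: S) *m X *m (Pm R (~: S))^T) i j = 0.
Proof.
move=> h; rewrite !mxE big1 // => k _.
case/orP: h => h.
  rewrite !mxE big1 ?mul0r // => l _; rewrite !mxE.
  case: eqP => [e|]; last by rewrite mul0r.
  by have := enum_valP l; rewrite inE -e h.
rewrite !mxE; case: eqP => [e|]; last by rewrite mulr0.
by have := enum_valP k; rewrite inE -e h.
Qed.

Lemma qf_conj (R : rcfType) n k (P : 'M[R]_(n,k)) (X : 'M[R]_k) (u : 'cV[R]_n) :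
  qf u (P *m X *m P^T) = qf (P^T *m u) X.
Proof. by rewrite /qf trmx_mul trmxK !mulmxA. Qed.

Lemma blockid (R : rcfType) s c (a : 'cV[R]_s) (b : 'cV[R]_c) A B C M
  (hAM : A *m M = 1%:M) (hMA : M *m A = 1%:M) (hM : M^T = M) :
 a^T *m A *m a + a^T *m B *m b + b^T *m B^T *m a + b^T *m C *m b =
 (a + M *m (B *m b))^T *m A *m (a + M *m (B *m b)) + b^T *m (C - B^T *m M *m B) *m b.
Proof.
rewrite !linearD /= !trmx_mul hM ?mulmxDl ?mulmxDr ?mulmxA.

rewrite -[a^T *m A *m M](mulmxA) hAM mulmx1.
rewrite -[b^T *m B^T *m M *m A](mulmxA) hMA mulmx1.
rewrite mulmxN mulNmx.
set x1 := a^T *m A *m a; set x2 := a^T *m B *m b; set x3 := b^T *m B^T *m a.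
set x4 := b^T *m B^T *m M *m B *m b; set x5 := b^T *m C *m b.
have -> : b^T *m (B^T *m M *m B) *m b = x4 by rewrite !mulmxA.
rewrite -!addrA [x4 + _]addrC subrK.
by rewrite (addrCA x2).
Qed.

Lemma schurE (R : rcfType) m (S : {set 'I_m}) (Sig : 'M[R]_m) (hS : Sig^T = Sig) :
  schur S Sig = (Pm R (~: S))^T *m Sig *m Pm R (~: S) -
    ((Pm R S)^T *m Sig *m Pm R (~: S))^T *m invmx ((Pm R S)^T *m Sig *m Pm R S)
    *m ((Pm R S)^T *m Sig *m Pm R (~: S)).
Proof. by rewrite /schur !submE !trmx_mul trmxK hS !mulmxA. Qed.

Lemma addmx00 (R : rcfType) (X Y : 'M[R]_1) : X 0 0 + Y 0 0 = (X + Y) 0 0.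
Proof. by rewrite mxE. Qed.

Lemma qf_decomp (R : rcfType) m (S : {set 'I_m}) (Sig : 'M[R]_m) (hS : Sig^T = Sig)
  (hU : (Pm R S)^T *m Sig *m Pm R S \in unitmx) (u : 'cV[R]_m) :
  qf u Sig = qf ((Pm R S)^T *m u + invmx ((Pm R S)^T *m Sig *m Pm R S) *m
       (((Pm R S)^T *m Sig *m Pm R (~: S)) *m ((Pm R (~: S))^T *m u)))
       ((Pm R S)^T *m Sig *m Pm R S)
     + qf ((Pm R (~: S))^T *m u) (schur S Sig).
Proof.
rewrite schurE // /qf addmx00 -blockid; first last.
- by rewrite trmx_inv !trmx_mul trmxK hS !mulmxA.
- exact: mulVmx.
- exact: mulmxV.
congr (_ _ 0 0).
set a := (Pm R S)^T *m u; set b := (Pm R (~: S))^T *m u.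
have hu : u = Pm R S *m a + Pm R (~: S) *m b.
  by rewrite /a /b !mulmxA -mulmxDl PPt1 mul1mx.
rewrite [in LHS]hu !linearD /= !mulmxDl.
rewrite !trmx_mul !trmxK hS !mulmxA.
by rewrite !addrA; congr (_ + _); rewrite addrAC.
Qed.

Lemma qf0 (R : rcfType) n (A : 'M[R]_n) : qf 0 A = 0.
Proof. by rewrite /qf mulmx0 mxE. Qed.

Lemma qfB (R : rcfType) n (u : 'cV[R]_n) (X Y : 'M[R]_n) : qf u (X - Y) = qf u X - qf u Y.
Proof. by rewrite /qf mulmxBr mulmxBl !mxE. Qed.

Lemma qfD (R : rcfType) n (u : 'cV[R]_n) (X Y : 'M[R]_n) : qf u (X + Y) = qf u X + qf u Y.
Proof. by rewrite /qf mulmxDr mulmxDl !mxE. Qed.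

Lemma qf_scal (R : rcfType) n (b : 'cV[R]_n) e :
  qf b (e%:M) = e * \sum_k (b k 0) ^+ 2.
Proof.
rewrite /qf mul_mx_scalar -scalemxAl mxE mxE; congr (_ * _).
by apply: eq_bigr => k _; rewrite mxE expr2.
Qed.

Lemma sumsq_gt0 (R : rcfType) n (b : 'cV[R]_n) : b != 0 -> 0 < \sum_k (b k 0) ^+ 2.
Proof.
move=> nb; rewrite lt_def sumr_ge0 ?andbT; last by move=> k _; rewrite sqr_ge0.
apply/eqP => h; move/eqP: nb; apply; apply/matrixP => k z.
rewrite ord1 mxE; apply/eqP; rewrite -sqrf_eq0; apply/eqP.
by apply: (psumr_eq0P _ h) => // i _; rewrite sqr_ge0.
Qed.

Lemma pd_ge0 (R : rcfType) m (Sig : 'M[R]_m) : posdef Sig -> forall v, 0 <= qf v Sig.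
Proof.
move=> [_ h] v; case: (eqVneq v 0) => [->|nv]; first by rewrite qf0.
exact: ltW (h v nv).
Qed.

Lemma qf_sub (R : rcfType) m k (P : 'M[R]_(m, k)) (Sig : 'M[R]_m) x :
  qf x (P^T *m Sig *m P) = qf (P *m x) Sig.
Proof. by rewrite /qf trmx_mul !mulmxA. Qed.

Lemma sub_unit (R : rcfType) m (S : {set 'I_m}) (Sig : 'M[R]_m) :
  posdef Sig -> (Pm R S)^T *m Sig *m Pm R S \in unitmx.
Proof.
move=> [hs hp]; rewrite unitmxE unitfE; apply/negP => /det0P [v nv hv].
have nv' : Pm R S *m v^T != 0.
  apply: contra nv => /eqP h; rewrite -trmx_eq0.
  by rewrite -[v^T]mul1mx -(PtP1 R S) -mulmxA h mulmx0.
have := hp _ nv'; rewrite -qf_sub /qf trmxK hv mul0mx mxE.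
by rewrite ltxx.
Qed.

Lemma addE00 (R : rcfType) (X Y : 'M[R]_1) : (X + Y) 0 0 = X 0 0 + Y 0 0.
Proof. by rewrite mxE. Qed.

Lemma bilin (R : rcfType) n (Q : 'M[R]_n) (hQ : Q^T = Q) (x y : 'cV[R]_n) :
  qf (x + y) Q = qf x Q + qf y Q + 2 * (x^T *m Q *m y) 0 0.
Proof.
have e : (y^T *m Q *m x) 0 0 = (x^T *m Q *m y) 0 0.
  transitivity ((y^T *m Q *m x)^T 0 0); first by rewrite [RHS]mxE.
  by rewrite !trmx_mul trmxK hQ mulmxA.
rewrite /qf [(x + y)^T]linearD /= mulmxDl (mulmxDr (x^T *m Q + y^T *m Q) x y) !mulmxDl.
rewrite !addE00 e.
rewrite mulr2n mulrDl mul1r !addrA.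
set p := (x^T *m Q *m x) 0 0; set q := (y^T *m Q *m y) 0 0; set r := (x^T *m Q *m y) 0 0.
ring.
Qed.

Lemma psd_bil0 (R : rcfType) n (Q : 'M[R]_n) (hQ : Q^T = Q)
  (hp : forall v, 0 <= qf v Q) (x w : 'cV[R]_n) : qf w Q = 0 -> (x^T *m Q *m w) 0 0 = 0.
Proof.
move=> hw; apply/eqP; apply/negP => /negP nb.
set b := (x^T *m Q *m w) 0 0 in nb.
set t := - (qf x Q + 1) / (2 * b).
have := hp (x + t *: w); rewrite bilin //.
have -> : qf (t *: w) Q = t ^+ 2 * qf w Q.
  by rewrite /qf !linearZ /= -!scalemxAl !mxE mulrA expr2.
rewrite hw mulr0 addr0 -scalemxAr mxE -/b.
have -> : 2 * (t * b) = - (qf x Q + 1).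
  rewrite /t mulrCA -mulrA mulVf ?mulr1 //.
  by rewrite mulf_neq0 // pnatr_eq0.
by rewrite opprD addrA subrr sub0r oppr_ge0 ler10.
Qed.

Lemma schur_sym (R : rcfType) m (S : {set 'I_m}) (Sig : 'M[R]_m) :
  Sig^T = Sig -> (schur S Sig)^T = schur S Sig.
Proof.
move=> hS; rewrite schurE // linearB /= !trmx_mul !trmxK trmx_inv !trmx_mul hS.
by rewrite !trmxK !mulmxA.
Qed.

Lemma schur_le (R : rcfType) m (S : {set 'I_m}) (Sig : 'M[R]_m) :
  posdef Sig -> forall v, qf ((Pm R (~: S))^T *m v) (schur S Sig) <= qf v Sig.
Proof.
move=> hpd v; have [hS _] := hpd.
rewrite (qf_decomp hS (sub_unit S hpd) v) lerDr qf_sub.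
exact: pd_ge0.
Qed.

Lemma pd_pert (R : rcfType) m (S : {set 'I_m}) (Sig : 'M[R]_m) e :
  posdef Sig -> 0 < e ->
  posdef (Sig - Pm R (~: S) *m (schur S Sig - e%:M) *m (Pm R (~: S))^T).
Proof.
move=> hpd he; have [hS hp] := hpd; split.
  rewrite linearB /= !trmx_mul trmxK linearB /= schur_sym // tr_scalar_mx hS.
  by rewrite mulmxA.
move=> v nv; rewrite qfB qf_conj.
case: (eqVneq ((Pm R (~: S))^T *m v) 0) => [->|nb].
  by rewrite qf0 subr0; apply: hp.
rewrite qfB qf_scal.
have h1 := schur_le S hpd v.
have h2 : 0 < e * \sum_k ((Pm R (~: S))^T *m v) k 0 ^+ 2.
  by rewrite mulr_gt0 // sumsq_gt0.
lra.
Qed.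

Lemma eps_le (R : rcfType) (x y s : R) : 0 <= s ->
  (forall e, 0 < e -> x <= y + e * s) -> x <= y.
Proof.
move=> hs h; rewrite leNgt; apply/negP => hyx.
have hs1 : 0 < s + 1 by rewrite ltr_wpDl.
set e := (x - y) / (s + 1).
have he : 0 < e by rewrite divr_gt0 // subr_gt0.
have H1 := h e he.
have H2 : e * s < x - y.
  apply: (lt_le_trans (y := e * (s + 1))); first by rewrite ltr_pM2l // ltrDl.
  by rewrite /e divfK ?gt_eqF.
lra.
Qed.
Unset Implicit Arguments. Set Strict Implicit.

Theorem proposition1 (R : rcfType) (m : nat) (S : {set 'I_m}) (se2 : R)
  (Gamma : 'M[R]_m -> 'M[R]_m) :
  (2 <= m)%N -> S != set0 -> S != setT -> 0 < se2 ->
  (forall Sigma, posdef Sigma -> (Gamma Sigma)^T = Gamma Sigma) ->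
  (* (i) *)
  (forall Sigma, posdef Sigma -> forall u : 'cV[R]_m,
     0 <= h2S se2 Gamma Sigma u /\ h2S se2 Gamma Sigma u <= h2 se2 Sigma u) ->
  (* (ii) *)
  (forall Sigma, posdef Sigma -> forall u : 'cV[R]_m,
     h2S se2 Gamma Sigma u = h2 se2 Sigma u <-> subv (~: S) u = 0) ->
  (* (iii) *)
  (forall Sigma Sigma', posdef Sigma -> posdef Sigma' ->
     (forall i j, ~~ ((i \notin S) && (j \notin S)) -> Sigma i j = Sigma' i j) ->
     Gamma Sigma = Gamma Sigma') ->
  forall Sigma, posdef Sigma -> forall u : 'cV[R]_m,
    h2S se2 Gamma Sigma u =
      (qf u Sigma - ((subv (~: S) u)^T *m schur S Sigma *m subv (~: S) u) 0 0)
      / (qf u Sigma + se2).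
Proof.
move=> _ _ _ hse hGs hi hii hiii Sig hpd u.
have den : forall S' : 'M[R]_m, posdef S' -> forall v, 0 < qf v S' + se2.
  by move=> S' hp v; have := pd_ge0 hp v; lra.
have hI : forall S' : 'M[R]_m, posdef S' -> forall v,
    0 <= qf v (Gamma S') /\ qf v (Gamma S') <= qf v S'.
  move=> S' hp v; have [h1 h2] := hi S' hp v; have d := den S' hp v.
  move: h1 h2; rewrite /h2S /h2 pmulr_lge0 ?invr_gt0 // ler_pM2r ?invr_gt0 //.
have hII : forall v, subv (~: S) v = 0 -> qf v (Gamma Sig) = qf v Sig.
  move=> v /(hii Sig hpd v) /(congr1 (fun z => z * (qf v Sig + se2))).
  by rewrite /h2S /h2 !divfK // gt_eqF // den.
suff key : qf u (Gamma Sig) = qf u Sig - qf (subv (~: S) u) (schur S Sig).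
  by rewrite /h2S key.
rewrite subvE.
have [hS _] := hpd.
set b := (Pm R (~: S))^T *m u.
set A := (Pm R S)^T *m Sig *m Pm R S.
set Bm := (Pm R S)^T *m Sig *m Pm R (~: S).
set a0 := (Pm R S)^T *m u + invmx A *m (Bm *m b).
set us := u - Pm R S *m a0.
have hPcu : (Pm R (~: S))^T *m us = b.
  by rewrite /us mulmxBr mulmxA PtP0 mul0mx subr0.
have hPsu : (Pm R S)^T *m us = - (invmx A *m (Bm *m b)).
  by rewrite /us mulmxBr mulmxA PtP1 mul1mx /a0 opprD addrA subrr sub0r.
have hK : qf us Sig = qf b (schur S Sig).
  by rewrite (qf_decomp hS (sub_unit S hpd)) hPsu hPcu -/A -/Bm addNr qf0 add0r.
set Q := Sig - Gamma Sig.
have hQs : Q^T = Q by rewrite /Q linearB /= hS hGs.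
have hQp : forall v, 0 <= qf v Q.
  by move=> v; rewrite /Q qfB subr_ge0; case: (hI Sig hpd v).
have hw : qf (Pm R S *m a0) Q = 0.
  rewrite /Q qfB hII ?subrr // subvE mulmxA PtP0 mul0mx //.
have hf : qf u Q = qf us Q.
  have -> : u = us + Pm R S *m a0 by rewrite /us subrK.
  by rewrite bilin // hw psd_bil0 // mulr0 !addr0.
have up : qf u Sig - qf b (schur S Sig) <= qf u (Gamma Sig).
  have := hI Sig hpd us; case=> h0 _.
  move: hf; rewrite /Q (qfB u) (qfB us) hK => hf; lra.
apply/eqP; rewrite eq_le up andbT.
have hs : 0 <= \sum_k (b k 0) ^+ 2 by apply: sumr_ge0 => k _; rewrite sqr_ge0.
apply: (eps_le hs) => e he.
have hpd' := pd_pert S hpd he.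
have eG : Gamma Sig = Gamma (Sig - Pm R (~: S) *m (schur S Sig - e%:M) *m (Pm R (~: S))^T).
  apply: hiii => // i j h; rewrite mxE [X in _ + X]mxE PXPt0 ?oppr0 ?addr0 //.
  by move: h; rewrite negb_and !negbK.
have [_ h] := hI _ hpd' u; rewrite -eG in h.
move: h; rewrite qfB qf_conj qfB qf_scal -/b; lra.
Qed.
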